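(* Let $a, b \in \mathbb{N}$ and $n \in \mathbb{Z}^+$. Consider, in the ring $\mathbb{Z}$, the Frobenius template $(\mathbb{N}, (n + \mathbb{N}) \cup \{0\}, \mathbb{N})$. If $a, b$ are coprime and $n - 1$ is divisible by neither $a$ nor $b$, then \[ \mathrm{Frob}(a, b) = (a + b)n + \chi(a, b) + \mathbb{N}, \] where $\mathrm{Frob}$ is taken with respect to this template.
   Context: $\mathbb{N}$ denotes the nonnegative integers and $\mathbb{Z}^+ = \mathbb{N}\setminus\{0\}$; for $S \subseteq \mathbb{Z}$ and $g \in \mathbb{Z}$, $g + S = \{g + s : s \in S\}$. For coprime $a, b \in \mathbb{N}$, $\chi(a,b)$ denotes the least $w \in \mathbb{N}$ such that $w + \mathbb{N} \subseteq \{\lambda_1 a + \lambda_2 b : \lambda_1, \lambda_2 \in \mathbb{N}\}$; it equals $(a-1)(b-1)$. For the template $(\mathbb{N}, (n + \mathbb{N}) \cup \{0\}, \mathbb{N})$: $MN(a, b) = \{\lambda_1 a + \lambda_2 b : \lambda_1, \lambda_2 \in (n + \mathbb{N}) \cup \{0\}\}$ and $\mathrm{Frob}(a, b) = \{w \in \mathbb{Z} : w + \mathbb{N} \subseteq MN(a, b)\}$. *)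

(* Defs.v *)
From mathcomp Require Import all_boot all_order all_algebra.
Set Implicit Arguments. Unset Strict Implicit. Unset Printing Implicit Defensive.
Import GRing.Theory Num.Theory.
Local Open Scope ring_scope.

Definition sgrp2 (a b : nat) (x : nat) : Prop :=
  exists l1 l2 : nat, x = (l1 * a + l2 * b)%N.

Definition is_chi (a b : nat) (w : nat) : Prop :=
  (forall k : nat, sgrp2 a b (w + k)) /\
  (forall w' : nat, (forall k : nat, sgrp2 a b (w' + k)) -> (w <= w')%N).

Definition coefset (n : nat) (l : nat) : Prop := l = 0%N \/ (n <= l)%N.

Definition MN (n a b : nat) (x : int) : Prop :=
  exists l1 l2 : nat, coefset n l1 /\ coefset n l2 /\
    x = ((l1 * a + l2 * b)%N)%:Z.

Definition Frob (n a b : nat) (w : int) : Prop :=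
  forall k : nat, MN n a b (w + k%:Z).

(* Main.v *)
Require Import Defs.
From mathcomp Require Import all_boot all_order all_algebra zify.
Import GRing.Theory Num.Theory.
Local Open Scope ring_scope.

Lemma syl_not (a b : nat) : (2 <= a)%N -> (2 <= b)%N -> coprime a b ->
  ~ sgrp2 a b (a * b - a - b)%N.
Proof.
move=> a2 b2 cop [x [y E]].
have E2 : (a * b = (x.+1) * a + (y.+1) * b)%N.
  have : (a + b <= a * b)%N.
    case: a a2 {cop E} => [|[|a]] // _; case: b b2 => [|[|b]] // _. nia.
  move=> h. rewrite !mulSn. lia.
have ha : (a %| y.+1)%N.
  have : (a %| y.+1 * b)%N by rewrite -(dvdn_addr _ (dvdn_mull x.+1 (dvdnn a))) -E2 dvdn_mulr.
  by rewrite Gauss_dvdl.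
have hb : (b %| x.+1)%N.
  have : (b %| x.+1 * a)%N by rewrite -(dvdn_addl _ (dvdn_mull y.+1 (dvdnn b))) -E2 dvdn_mull.
  by rewrite Gauss_dvdl // coprime_sym.
have h1 := dvdn_leq (ltn0Sn _) ha; have h2 := dvdn_leq (ltn0Sn _) hb.
have : (b * a <= x.+1 * a)%N by rewrite leq_mul2r h2 orbT.
have : (a * b <= y.+1 * b)%N by rewrite leq_mul2r h1 orbT.
have : (0 < a * b)%N by rewrite muln_gt0; lia.
lia.
Qed.

Lemma syl_all (a b : nat) : (2 <= a)%N -> (2 <= b)%N -> coprime a b ->
  forall m, ((a.-1 * b.-1) <= m)%N -> sgrp2 a b m.
Proof.
move=> a2 b2 cop m hm.
have [u ub hu] := Bezoutr a (ltnW b2).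
rewrite (eqP cop) in hu.
case/dvdnP: hu => k hk.
pose x := (((b.-1) * u * m) %% b)%N.
have xb : (x < b)%N by rewrite ltn_mod; lia.
have hx : (x * a = m %[mod b])%N.
  rewrite /x modnMml.
  have k1 : (1 <= k)%N by case: k hk => //; rewrite mul0n addnC.
  have -> : ((b.-1) * u * m * a = m + ((b.-1) * k - 1) * m * b)%N.
    set Q := (b.-1 * k)%N.
    have hQ : (b.-1 * (u * a) + b = Q * b + 1)%N.
      rewrite /Q -mulnA -hk mulnDr muln1; lia.
    have Q1 : (1 <= Q)%N by rewrite /Q muln_gt0; lia.
    have hP : (b.-1 * (u * a) = (Q - 1) * b + 1)%N.
      have : (b <= Q * b)%N by rewrite leq_pmull.
      rewrite mulnBl mul1n. lia.
    have e1 : (b.-1 * u * m * a = m * (b.-1 * (u * a)))%N.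
      nia.
    rewrite e1 hP mulnDr muln1 addnC; congr (_ + _)%N.
    by rewrite mulnCA mulnA.
  by rewrite addnC modnMDl.
case: (leqP (x * a) m) => hle.
  have : (b %| m - x * a)%N by rewrite -(eqn_mod_dvd _ hle) hx.
  case/dvdnP => y hy. exists x, y. lia.
exfalso.
have : (b %| x * a - m)%N by rewrite -(eqn_mod_dvd _ (ltnW hle)) hx eqxx.
move/(dvdn_leq); rewrite subn_gt0 => /(_ hle) hb.
have : (x * a <= b.-1 * a)%N by rewrite leq_mul2r; lia.
have : (a.-1 * b.-1 + b.-1 = b.-1 * a)%N.
  case: a a2 {cop hm u ub hk x xb hx hle hb} => [|a] // _. rewrite mulnC -mulnSr. by [].
lia.
Qed.

Lemma chi_val (a b c : nat) : (2 <= a)%N -> (2 <= b)%N -> coprime a b ->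
  is_chi a b c -> c = (a.-1 * b.-1)%N.
Proof.
move=> a2 b2 cop [hall hmin].
have h1 : (c <= a.-1 * b.-1)%N.
  apply: hmin => k; apply: syl_all => //; lia.
apply/eqP; rewrite eqn_leq h1 /=; apply/negP => /negP; rewrite -ltnNge => lt.
have := hall (a.-1 * b.-1 - 1 - c)%N.
have -> : (c + (a.-1 * b.-1 - 1 - c) = a * b - a - b)%N.
  move: lt; case: a a2 {cop hall hmin h1} => [|[|a]] // _; case: b b2 => [|[|b]] // _.
  rewrite /=. nia.
exact: syl_not.
Qed.

Lemma not_MN (a b n l1 l2 : nat) : (2 <= a)%N -> (2 <= b)%N -> coprime a b ->
  ~~ (a %| n.-1)%N -> ~~ (b %| n.-1)%N -> (0 < n)%N ->
  coefset n l1 -> coefset n l2 ->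
  ((a + b) * n + a.-1 * b.-1 - 1 = l1 * a + l2 * b)%N -> False.
Proof.
move=> a2 b2 cop na nb n0 c1 c2 E.
have E' : (a * n.-1 + b * (n.-1 + a) = l1 * a + l2 * b)%N.
  rewrite -E. case: a a2 {cop na E c1} => [|[|a]] // _; case: b b2 {nb} => [|[|b]] // _.
  case: n n0 {c2} => [|n] // _. rewrite /=. nia.
case: c1 => [l10|l1n].
  move: E'; rewrite l10 mul0n add0n => E'.
  have : (b %| a * n.-1)%N.
    by rewrite -(dvdn_addl _ (dvdn_mulr (n.-1 + a) (dvdnn b))) E' dvdn_mull.
  by rewrite Gauss_dvdr ?(negbTE nb) // coprime_sym.
case: c2 => [l20|l2n].
  move: E'; rewrite l20 mul0n addn0 => E'.
  have : (a %| b * (n.-1 + a))%N.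
    by rewrite -(dvdn_addr _ (dvdn_mulr n.-1 (dvdnn a))) E' dvdn_mull.
  rewrite Gauss_dvdr // dvdn_addl ?dvdnn //. by rewrite (negbTE na).
case: (syl_not a b a2 b2 cop); exists (l1 - n)%N, (l2 - n)%N.
have : (n * a <= l1 * a)%N by rewrite leq_mul2r l1n orbT.
have : (n * b <= l2 * b)%N by rewrite leq_mul2r l2n orbT.
rewrite !mulnBl.
move: E'; case: a a2 {cop na E} => [|[|a]] // _; case: b b2 {nb} => [|[|b]] // _.
case: n n0 {l1n l2n} => [|n] // _ E'. rewrite /= in E' *. nia.
Qed.

Theorem proposition3p2 (a b n : nat) (c : nat) :
  (0 < n)%N -> coprime a b ->
  ~~ (a %| n.-1)%N -> ~~ (b %| n.-1)%N ->
  is_chi a b c ->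
  forall w : int,
    Frob n a b w <-> exists k : nat, w = (((a + b) * n + c)%N)%:Z + k%:Z.
Proof.
move=> n0 cop na nb hc w.
have a2 : (2 <= a)%N.
  case: a cop na {hc} => [|[|a]] //.
    by rewrite /coprime gcd0n => /eqP eb; rewrite eb dvd1n in nb.
  by rewrite dvd1n.
have b2 : (2 <= b)%N.
  case: b cop nb {hc} => [|[|b]] //.
    by rewrite /coprime gcdn0 => /eqP eb; rewrite eb dvd1n in na.
  by rewrite dvd1n.
have -> := chi_val a b c a2 b2 cop hc.
split.
  move=> hF.
  case: (Order.TotalTheory.ltP w ((((a + b) * n + a.-1 * b.-1)%N)%:Z)) => hw.
    exfalso.
    have [l1 [l2 [c1 [c2 E]]]] := hF `|(((a + b) * n + a.-1 * b.-1 - 1)%N)%:Z - w|%N.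
    apply: (not_MN a b n l1 l2 a2 b2 cop na nb n0 c1 c2).
    apply/eqP; rewrite -(eqz_nat); apply/eqP; rewrite -E.
    have : (0 < (a + b) * n)%N by rewrite muln_gt0; lia.
    lia.
  exists `|w - (((a + b) * n + a.-1 * b.-1)%N)%:Z|%N. lia.
move=> [k ->] j.
have [x [y hxy]] := syl_all a b a2 b2 cop _ (leq_addr (k + j) (a.-1 * b.-1)).
exists (n + x)%N, (n + y)%N; split; first by right; apply: leq_addr.
split; first by right; apply: leq_addr.
rewrite -!PoszD; congr Posz.
rewrite !mulnDl -!addnA hxy (mulnC a n) (mulnC b n). lia.
Qed.
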